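(* Let $T$ be a torus, $X$ a finite $T$-CW complex, $(t,x)\in\mathcal X^+\times\mathfrak t_{\mathbb C}$ and $a=\zeta_{T,t}(x)\in E_{T,t}$. Evaluation of loops at $(0,0)\in\mathbb T^2$ restricts to a homeomorphism \[ ev_{t,x}:L^2X^{t,x}\xrightarrow{\cong}X^a, \] natural in $X$ and equivariant with respect to the homomorphism $\nu:T/T(a)\to(\mathbb T^2\times T)/T(t,x)$ induced by the inclusion $T\hookrightarrow\mathbb T^2\times T$, $u\mapsto(0,u)$ (i.e. $ev_{t,x}(\nu(g)\cdot\gamma)=g\cdot ev_{t,x}(\gamma)$).
   Context: $\mathbb T=\mathbb R/\mathbb Z$, $T$ torus, $\check T=\mathrm{Hom}(\mathbb T,T)$, $\mathfrak t=\check T\otimes\mathbb R$, $\mathfrak t_{\mathbb C}=\check T\otimes\mathbb C$, $\pi:\mathfrak t\to T$ the quotient. $\mathcal X^+=\{(t_1,t_2)\in\mathbb C^2:\mathbb Rt_1+\mathbb Rt_2=\mathbb C,\ \mathrm{Im}(t_1/t_2)>0\}$, $E_t=\mathbb C/(\mathbb Zt_1+\mathbb Zt_2)$, $E_{T,t}=\check T\otimes E_t$, $\zeta_{T,t}:\mathfrak t_{\mathbb C}\to E_{T,t}$ the quotient. For $a\in E_{T,t}$, $T(a)$ is the intersection of all closed $H\subset T$ with $a\in\mathrm{Hom}(\hat H,E_t)\subset E_{T,t}$ (explicitly, writing $x=x_1t_1+x_2t_2$ with $x_i\in\mathfrak t$, $T(a)$ is generated by $\pi(x_1),\pi(x_2)$),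 and $X^a$ is its fixed point set. $L^2X=\mathrm{Map}(\mathbb T^2,X)$ with $\mathbb T^2\times T$ acting by $((r,u)\cdot\gamma)(s)=u\cdot\gamma(s-r)$. $T(t,x)$ is the intersection of all closed $K\subset\mathbb T^2\times T$ with $(t,x)\in\mathrm{Lie}(K)\otimes\mathbb C\subset\mathbb C^2\times\mathfrak t_{\mathbb C}$, and $L^2X^{t,x}$ is its fixed point set; one has $T(a)=T\cap T(t,x)$, so $\nu$ is well defined. $L^2X^{t,x}$ carries the induced action of $(\mathbb T^2\times T)/T(t,x)$ and $X^a$ that of $T/T(a)$. *)

(* Defs.v *)
From HB Require Import structures.
From mathcomp Require Import all_boot all_order all_algebra.
From mathcomp Require Import all_classical all_reals all_analysis.
From mathcomp Require Import Rstruct Rstruct_topology.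
From mathcomp.real_closed Require Import complex.

Set Implicit Arguments.
Unset Strict Implicit.
Unset Printing Implicit Defensive.

Import Order.TTheory GRing.Theory Num.Theory.
Local Open Scope classical_set_scope.
Local Open Scope ring_scope.
Local Open Scope complex_scope.

Notation RR := Rdefinitions.R.
Notation CC := (Rdefinitions.R[i]).

(** A torus of rank n is T = t / Tcheck with t = R^n and
    Tcheck = Z^n; so 𝕋 = R/Z, 𝕋^2 = R^2/Z^2, t_C = C^n.  Everything
    concerning T is expressed through lifts along the quotient map
    pi : R^n -> T (an open surjective homomorphism):
    - a continuous T-action on X is a continuous R^n-action on X that is
      trivial on Z^n;
    - a closed subgroup H of T is represented by its (closed) preimage in
      R^n, i.e. a closed subgroup of R^n containing Z^n;
    - a loop  T^2 -> X  is a continuous Z^2-periodic map  R^2 -> X. *)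

Definition integral_vec m (k : 'rV[RR]_m) : Prop :=
  forall i, k 0 i \is a Num.int.

Definition torus_action n (X : topologicalType) (act : 'rV[RR]_n -> X -> X)
  : Prop :=
  [/\ continuous (fun p : 'rV[RR]_n * X => act p.1 p.2),
      forall p, act 0 p = p,
      forall u v p, act (u + v) p = act u (act v p)
    & forall k p, integral_vec k -> act k p = p].

Definition torus_subgroup n (H : set 'rV[RR]_n) : Prop :=
  [/\ closed H,
      forall k, integral_vec k -> H k
    & forall u v, H u -> H v -> H (u - v)].

Definition torus2_subgroup n (K : set ('rV[RR]_2 * 'rV[RR]_n)) : Prop :=
  [/\ closed K,
      forall r u, integral_vec r -> integral_vec u -> K (r, u)
    & forall a b, K a -> K b -> K (a.1 - b.1, a.2 - b.2)].

Definition lie2 n (K : set ('rV[RR]_2 * 'rV[RR]_n)) (w : 'rV[RR]_2 * 'rV[RR]_n)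
  : Prop := forall c : RR, K (c *: w.1, c *: w.2).

Definition t1 (t : 'rV[CC]_2) : CC := t 0 ord0.
Definition t2 (t : 'rV[CC]_2) : CC := t 0 ord_max.

(** (t, x) lies in Lie(K) ⊗ C  (= Lie(K) + i Lie(K) inside C^2 x C^n) *)
Definition in_lieC n (K : set ('rV[RR]_2 * 'rV[RR]_n))
  (t : 'rV[CC]_2) (x : 'rV[CC]_n) : Prop :=
  exists v w, [/\ lie2 K v, lie2 K w,
    forall j, t 0 j = Complex (v.1 0 j) (w.1 0 j)
  & forall k, x 0 k = Complex (v.2 0 k) (w.2 0 k)].

Definition Xplus (t : 'rV[CC]_2) : Prop :=
  (forall z : CC, exists a b : RR, z = a%:C * t1 t + b%:C * t2 t)
  /\ 0 < complex.Im (t1 t / t2 t).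

Definition decomp n (t : 'rV[CC]_2) (x : 'rV[CC]_n) (x1 x2 : 'rV[RR]_n) : Prop :=
  forall k, x 0 k = (x1 0 k)%:C * t1 t + (x2 0 k)%:C * t2 t.

(** (preimage in R^n of) T(a), a = zeta_{T,t}(x): the closed subgroup of T
    generated by pi(x1), pi(x2) *)
Definition Ta n (t : 'rV[CC]_2) (x : 'rV[CC]_n) : set 'rV[RR]_n :=
  [set u | forall H, torus_subgroup H ->
     (forall x1 x2, decomp t x x1 x2 -> H x1 /\ H x2) -> H u].

Definition Ttx n (t : 'rV[CC]_2) (x : 'rV[CC]_n)
  : set ('rV[RR]_2 * 'rV[RR]_n) :=
  [set p | forall K, torus2_subgroup K -> in_lieC K t x -> K p].

Definition fixed_pts n (X : Type) (act : 'rV[RR]_n -> X -> X)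
  (S : set 'rV[RR]_n) : set X :=
  [set p | forall u, S u -> act u p = p].

Definition loopT (X : topologicalType) := {compact-open, 'rV[RR]_2 -> X}.

Definition L2 (X : topologicalType) : set (loopT X) :=
  [set g | continuous (g : 'rV[RR]_2 -> X) /\
           forall s k, integral_vec k -> g (s + k) = g s].

Definition loop_act n (X : topologicalType) (act : 'rV[RR]_n -> X -> X)
  (p : 'rV[RR]_2 * 'rV[RR]_n) (g : loopT X) : loopT X :=
  fun s => act p.2 (g (s - p.1)).

Definition L2fix n (X : topologicalType) (act : 'rV[RR]_n -> X -> X)
  (t : 'rV[CC]_2) (x : 'rV[CC]_n) : set (loopT X) :=
  [set g | L2 g /\ forall p, Ttx t x p -> loop_act act p g = g].

Definition ev (X : topologicalType) (g : loopT X) : X := g 0.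

(** closed / open cells (the cube [-1,1]^d, homeomorphic to D^d) *)
Definition closed_cell d : set 'rV[RR]_d := [set v | `|v| <= 1].
Definition open_cell d : set 'rV[RR]_d := [set v | `|v| < 1].

(** finite T-CW complex: Hausdorff T-space with finitely many equivariant
    cells  T/H_i x D^{d_i} -> X  (characteristic maps, lifted to
    R^n x D^{d_i}), whose open cells partition X, each characteristic map
    being injective on T/H_i x int D^{d_i}, and the boundary of every cell
    lying in the union of cells of strictly smaller dimension. *)
Definition finite_TCW n (X : topologicalType) (act : 'rV[RR]_n -> X -> X)
  : Prop :=
  [/\ torus_action act, hausdorff_space X &
  exists (m : nat) (d : 'I_m -> nat) (H : 'I_m -> set 'rV[RR]_n)
         (Phi : forall i : 'I_m, 'rV[RR]_n * 'rV[RR]_(d i) -> X),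
  [/\ forall i, torus_subgroup (H i),
      forall i, {within [set p | closed_cell p.2], continuous (Phi i)},
      forall i u s v, Phi i (u + s, v) = act u (Phi i (s, v)),
      forall i s s' v, closed_cell v -> H i (s - s') -> Phi i (s, v) = Phi i (s', v)
    & [/\ forall i s s' v v', open_cell v -> open_cell v' ->
        Phi i (s, v) = Phi i (s', v') -> v = v' /\ H i (s - s'),
      forall i j s s' v v', i != j -> open_cell v -> open_cell v' ->
        Phi i (s, v) <> Phi j (s', v'),
      forall p, exists i s v, open_cell v /\ p = Phi i (s, v)
    & forall i s v, `|v| = 1 -> exists j s' v',
        [/\ (d j < d i)%N, open_cell v' & Phi i (s, v) = Phi j (s', v')]]]].

(* Main.v *)
Require Import Defs.
From HB Require Import structures.
From mathcomp Require Import all_boot all_order all_algebra.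
From mathcomp Require Import all_classical all_reals all_analysis.
From mathcomp Require Import Rstruct Rstruct_topology.
From mathcomp.real_closed Require Import complex.
Import Order.TTheory GRing.Theory Num.Theory.
Local Open Scope classical_set_scope.
Local Open Scope ring_scope.
From mathcomp Require Import ring lra.
Set Implicit Arguments.
Unset Strict Implicit.


Lemma ReIm_comb (a b : RR) (z w : CC) :
  complex.Re (a%:C * z + b%:C * w)%C = a * complex.Re z + b * complex.Re w /\
  complex.Im (a%:C * z + b%:C * w)%C = a * complex.Im z + b * complex.Im w.
Proof. case: z => p r; case: w => q s /=. simpc. rewrite /=. split; ring. Qed.

Definition lin n (x1 x2 : 'rV[RR]_n) (r : 'rV[RR]_2) : 'rV[RR]_n :=
  r 0 ord0 *: x1 + r 0 ord_max *: x2.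

Lemma linD n (x1 x2 : 'rV[RR]_n) r r' : lin x1 x2 (r + r') = lin x1 x2 r + lin x1 x2 r'.
Proof. by rewrite /lin !mxE !scalerDl addrACA. Qed.

Lemma linB n (x1 x2 : 'rV[RR]_n) r r' : lin x1 x2 (r - r') = lin x1 x2 r - lin x1 x2 r'.
Proof. by rewrite /lin !mxE !scalerBl opprD addrACA. Qed.

Lemma lin0 n (x1 x2 : 'rV[RR]_n) : lin x1 x2 0 = 0.
Proof. by rewrite /lin !mxE !scale0r addr0. Qed.

Lemma lin_cont n (x1 x2 : 'rV[RR]_n) : continuous (lin x1 x2).
Proof.
move=> r; apply: (@continuousD RR 'rV[RR]_n 'rV[RR]_2 (fun r => r 0 ord0 *: x1) (fun r => r 0 ord_max *: x2) r).
  by apply: continuousZr_tmp; apply: coord_continuous.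
by apply: continuousZr_tmp; apply: coord_continuous.
Qed.

Lemma ord2_cases (j : 'I_2) : j = ord0 \/ j = ord_max.
Proof.
case: j => -[|[|k]] Hj; [left|right|by []]; exact: val_inj.
Qed.

Lemma inv22 (p q r s a b c d : RR) :
  a * p + b * q = 1 -> a * r + b * s = 0 -> c * p + d * q = 0 -> c * r + d * s = 1 ->
  [/\ a * p + c * r = 1, a * q + c * s = 0, b * p + d * r = 0 & b * q + d * s = 1].
Proof.
move=> e1 e2 e3 e4.
have hD : (p * s - q * r) * (a * d - b * c) = 1.
  transitivity ((a * p + b * q) * (c * r + d * s) - (a * r + b * s) * (c * p + d * q)).
    ring.
  rewrite e1 e2 e3 e4; ring.
have ha : a * (p * s - q * r) = s.
  transitivity (s * (a * p + b * q) - q * (a * r + b * s)); first ring.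
  rewrite e1 e2; ring.
have hc : c * (p * s - q * r) = - q.
  transitivity (s * (c * p + d * q) - q * (c * r + d * s)); first ring.
  rewrite e3 e4; ring.
have hb : b * (p * s - q * r) = - r.
  transitivity (p * (a * r + b * s) - r * (a * p + b * q)); first ring.
  rewrite e1 e2; ring.
have hd : d * (p * s - q * r) = p.
  transitivity (p * (c * r + d * s) - r * (c * p + d * q)); first ring.
  rewrite e3 e4; ring.
have D0 : p * s - q * r != 0.
  apply/eqP => h0; move: hD; rewrite h0 mul0r => /eqP; by rewrite eq_sym oner_eq0.
set D := p * s - q * r in hD ha hb hc hd D0.
have key : forall u v : RR, u * D = v * D -> u = v.
  by move=> u v /(mulIf D0).
split; apply: key.
- by rewrite mulrDl -!mulrA [p * D]mulrC [r * D]mulrC !mulrA ha hc /D; ring.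
- by rewrite mulrDl -!mulrA [q * D]mulrC [s * D]mulrC !mulrA ha hc /D; ring.
- by rewrite mulrDl -!mulrA [p * D]mulrC [r * D]mulrC !mulrA hb hd /D; ring.
- by rewrite mulrDl -!mulrA [q * D]mulrC [s * D]mulrC !mulrA hb hd /D; ring.
Qed.

Lemma integral0 m : integral_vec (0 : 'rV[RR]_m).
Proof. by move=> i; rewrite mxE; exact: rpred0. Qed.

Lemma K_add n (K : set ('rV[RR]_2 * 'rV[RR]_n)) a b :
  torus2_subgroup K -> K a -> K b -> K (a.1 + b.1, a.2 + b.2).
Proof.
case=> _ Kint Ksub Ka Kb.
have K0 : K (0, 0) by apply: Kint; exact: integral0.
have := Ksub (0, 0) b K0 Kb; rewrite /= !sub0r => Kb'.
by have := Ksub a (- b.1, - b.2) Ka Kb'; rewrite /= !opprK.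
Qed.

Lemma H_sub n (H : set 'rV[RR]_n) u v : torus_subgroup H -> H u -> H v -> H (u - v).
Proof. by case=> _ _ Hs; apply: Hs. Qed.

Lemma H_add n (H : set 'rV[RR]_n) u v : torus_subgroup H -> H u -> H v -> H (u + v).
Proof.
move=> HH Hu Hv.
have H0 : H 0 by case: HH => _ Hi _; apply: Hi; exact: integral0.
have := H_sub HH H0 Hv; rewrite sub0r => Hv'.
by have := H_sub HH Hu Hv'; rewrite opprK.
Qed.

Lemma H_intmul n (H : set 'rV[RR]_n) u (m : int) : torus_subgroup H -> H u -> H (u *~ m).
Proof.
move=> HH Hu.
have H0 : H 0 by case: HH => _ Hi _; apply: Hi; exact: integral0.
have Hn : forall k : nat, H (u *+ k).
  elim=> [|k IH]; first by rewrite mulr0n.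
  by rewrite mulrS; apply: H_add.
case: m => k; first exact: Hn.
rewrite NegzE mulrNz; have := H_sub HH H0 (Hn k.+1); by rewrite sub0r.
Qed.

Lemma H_lin n (H : set 'rV[RR]_n) x1 x2 r : torus_subgroup H -> H x1 -> H x2 ->
  integral_vec r -> H (lin x1 x2 r).
Proof.
move=> HH H1 H2 ri; rewrite /lin.
have /intrP [m1 ->] := ri ord0.
have /intrP [m2 ->] := ri ord_max.
by rewrite !scaler_int; apply: (H_add HH); apply: H_intmul.
Qed.

Lemma Ta_sub n t (x : 'rV[CC]_n) u v : Ta t x u -> Ta t x v -> Ta t x (u - v).
Proof. by move=> Tu Tv H HH Hc; apply: H_sub => //; [apply: Tu | apply: Tv]. Qed.

Lemma Ta_int n t (x : 'rV[CC]_n) k : integral_vec k -> Ta t x k.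
Proof. by move=> ki H [_ Hi _] _; apply: Hi. Qed.

Lemma Ta_sg n t (x : 'rV[CC]_n) : torus_subgroup (Ta t x).
Proof.
split; [|exact: Ta_int|exact: Ta_sub].
have -> : Ta t x = \bigcap_(H in [set H : set 'rV[RR]_n | torus_subgroup H /\
     (forall x1 x2, decomp t x x1 x2 -> H x1 /\ H x2)]) H.
  apply/seteqP; split => u /=.
    by move=> Tu H [HH Hc]; apply: Tu.
  by move=> Hu H HH Hc; apply: Hu.
by apply: closed_bigI => H [[]].
Qed.

Lemma Ta_dec n t (x : 'rV[CC]_n) x1 x2 : decomp t x x1 x2 -> Ta t x x1 /\ Ta t x x2.
Proof.
move=> d; split => H HH Hc; by have [] := Hc _ _ d.
Qed.

Lemma Ttx_lin n t (x : 'rV[CC]_n) x1 x2 : Xplus t -> decomp t x x1 x2 ->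
  forall r, Ttx t x (r, lin x1 x2 r).
Proof.
move=> [span _] dec r K KK [v [w [Kv Kw Ht Hx]]].
have [a [b e1]] := span 1%R.
have [c [d e2]] := span 'i%C.
set p := v.1 0 ord0; set q := v.1 0 ord_max; set r' := w.1 0 ord0; set s := w.1 0 ord_max.
have T1 : t1 t = Complex p r' by rewrite /t1 Ht.
have T2 : t2 t = Complex q s by rewrite /t2 Ht.
have [E1 E2] := ReIm_comb a b (t1 t) (t2 t).
have [E3 E4] := ReIm_comb c d (t1 t) (t2 t).
rewrite -e1 T1 T2 /= in E1 E2; rewrite -e2 T1 T2 /= in E3 E4.
have [N1 N2 N3 N4] := inv22 (esym E1) (esym E2) (esym E3) (esym E4).
set al := r 0 ord0 * a + r 0 ord_max * b.
set be := r 0 ord0 * c + r 0 ord_max * d.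
have hA : al * p + be * r' = r 0 ord0.
  transitivity (r 0 ord0 * (a * p + c * r') + r 0 ord_max * (b * p + d * r')).
    by rewrite /al /be; ring.
  by rewrite N1 N3; ring.
have hB : al * q + be * s = r 0 ord_max.
  transitivity (r 0 ord0 * (a * q + c * s) + r 0 ord_max * (b * q + d * s)).
    by rewrite /al /be; ring.
  by rewrite N2 N4; ring.
have -> : (r, lin x1 x2 r) = (al *: v.1 + be *: w.1, al *: v.2 + be *: w.2).
  congr (_, _); apply/rowP => j; rewrite !mxE.
    case: (ord2_cases j) => ->; by [rewrite hA | rewrite hB].
  have Xk := Hx j; rewrite dec T1 T2 in Xk.
  have [F1 F2] := ReIm_comb (x1 0 j) (x2 0 j) (Complex p r') (Complex q s).
  rewrite Xk /= in F1 F2.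
  rewrite F1 F2.
  transitivity (x1 0 j * (al * p + be * r') + x2 0 j * (al * q + be * s)).
    by rewrite hA hB; ring.
  ring.
by have := K_add KK (Kv al) (Kw be).
Qed.

Lemma Ttx_Kh n t (x : 'rV[CC]_n) x1 x2 : decomp t x x1 x2 ->
  forall q, Ttx t x q -> Ta t x (q.2 - lin x1 x2 q.1).
Proof.
move=> dec q Tq.
have [T1 T2] := Ta_dec dec.
pose f := fun q : 'rV[RR]_2 * 'rV[RR]_n => q.2 - lin x1 x2 q.1.
apply: (Tq [set q | Ta t x (f q)]).
  split.
  - have -> : [set q | Ta t x (f q)] = f @^-1` (Ta t x) by [].
    apply: preimage_closed; last by case: (Ta_sg t x).
    move=> z _; apply: (@continuousB RR 'rV[RR]_n _ snd (fun q => lin x1 x2 q.1) z).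
      exact: cvg_snd.
    apply: (@continuous_comp _ _ _ fst (lin x1 x2)); first exact: cvg_fst.
    exact: lin_cont.
  - move=> r u ri ui; rewrite /f /=; apply: Ta_sub; first exact: Ta_int.
    by apply: H_lin => //; exact: Ta_sg.
  - move=> a b; rewrite /f /= linB => Ha Hb.
    have -> : a.2 - b.2 - (lin x1 x2 a.1 - lin x1 x2 b.1) =
              (a.2 - lin x1 x2 a.1) - (b.2 - lin x1 x2 b.1).
      by rewrite !opprD !opprK addrACA.
    exact: Ta_sub.
exists (\row_j complex.Re (t 0 j), \row_k complex.Re (x 0 k)).
exists (\row_j complex.Im (t 0 j), \row_k complex.Im (x 0 k)).
split.
- move=> c; rewrite /f /=.
  have -> : c *: \row_k complex.Re (x 0 k) - lin x1 x2 (c *: \row_j complex.Re (t 0 j)) = 0.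
    apply/rowP => k; rewrite /lin !mxE dec.
    have [F1 _] := ReIm_comb (x1 0 k) (x2 0 k) (t1 t) (t2 t).
    rewrite F1 /t1 /t2; ring.
  by apply: Ta_int; exact: integral0.
- move=> c; rewrite /f /=.
  have -> : c *: \row_k complex.Im (x 0 k) - lin x1 x2 (c *: \row_j complex.Im (t 0 j)) = 0.
    apply/rowP => k; rewrite /lin !mxE dec.
    have [_ F2] := ReIm_comb (x1 0 k) (x2 0 k) (t1 t) (t2 t).
    rewrite F2 /t1 /t2; ring.
  by apply: Ta_int; exact: integral0.
- by move=> j; rewrite !mxE; case: (t 0 j).
- by move=> k; rewrite !mxE; case: (x 0 k).
Qed.

Lemma cont_pair (T U V : topologicalType) (f : T -> U) (g : T -> V) x :
  {for x, continuous f} -> {for x, continuous g} -> {for x, continuous (fun y => (f y, g y))}.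
Proof. move=> cf cg; exact: (@cvg_pair _ _ _ (nbhs x) (nbhs (f x)) (nbhs (g x)) _ _ _ f g cf cg). Qed.

Lemma act_cont_pt n (X : topologicalType) (act : 'rV[RR]_n -> X -> X) p :
  torus_action act -> continuous (fun u => act u p).
Proof.
case=> cont _ _ _ u.
apply: (@continuous_comp _ _ _ (fun u => (u, p)) (fun q : 'rV[RR]_n * X => act q.1 q.2)).
  by apply: cont_pair; [exact: cvg_id | exact: cst_continuous].
exact: cont.
Qed.

Lemma act_cont_u n (X : topologicalType) (act : 'rV[RR]_n -> X -> X) u :
  torus_action act -> continuous (act u).
Proof.
case=> cont _ _ _ p.
apply: (@continuous_comp _ _ _ (fun p => (u, p)) (fun q : 'rV[RR]_n * X => act q.1 q.2)).
  by apply: (@cont_pair _ _ _ (fun _ => u) (fun p => p)); [exact: cst_continuous | exact: cvg_id].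
exact: cont.
Qed.

Lemma stab_closed n (X : topologicalType) (act : 'rV[RR]_n -> X -> X) p :
  torus_action act -> hausdorff_space X -> closed [set u | act u p = p].
Proof.
move=> Ha Hh.
have -> : [set u | act u p = p] = (fun u => act u p) @^-1` [set p] by [].
apply: preimage_closed; first by move=> u _; exact: act_cont_pt.
exact/accessible_closed_set1/hausdorff_accessible.
Qed.

Lemma L2_formula n (X : topologicalType) (act : 'rV[RR]_n -> X -> X) t x x1 x2 g :
  Xplus t -> decomp t x x1 x2 -> L2fix act t x g ->
  forall s, g s = act (lin x1 x2 s) (g 0).
Proof.
move=> XP dec [_ gf] s.
have := congr1 (fun h : loopT X => h s) (gf _ (Ttx_lin XP dec s)).
by rewrite /loop_act /= subrr.
Qed.

Definition e1 : 'rV[RR]_2 := \row_j (if j == ord0 then 1 else 0).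

Lemma lin_e1 n (x1 x2 : 'rV[RR]_n) : lin x1 x2 e1 = x1.
Proof. by rewrite /lin /e1 !mxE /= scale1r scale0r addr0. Qed.

Lemma e1_int : integral_vec e1.
Proof. by move=> i; rewrite mxE; case: (i == ord0); [exact: rpred1 | exact: rpred0]. Qed.

Definition e2 : 'rV[RR]_2 := \row_j (if j == ord_max then 1 else 0).

Lemma lin_e2 n (x1 x2 : 'rV[RR]_n) : lin x1 x2 e2 = x2.
Proof. by rewrite /lin /e2 !mxE /= scale1r scale0r add0r. Qed.

Lemma e2_int : integral_vec e2.
Proof. by move=> i; rewrite mxE; case: (i == ord_max); [exact: rpred1 | exact: rpred0]. Qed.

Unset Implicit Arguments.

Theorem mainTheorem16 (n : nat) (X : topologicalType)
  (act : 'rV[RR]_n -> X -> X) (t : 'rV[CC]_2) (x : 'rV[CC]_n) :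
  finite_TCW act -> Xplus t ->
  [/\ [/\ (* ev restricts to a map L^2X^{t,x} -> X^a ... *)
      forall g, L2fix act t x g -> fixed_pts act (Ta t x) (ev g),
      (* ... which is injective ... *)
      forall g g', L2fix act t x g -> L2fix act t x g' -> ev g = ev g' -> g = g',
      (* ... continuous ... *)
      {within L2fix act t x, continuous (@ev X)} &
      (* ... with a continuous inverse: a homeomorphism *)
      exists h : X -> loopT X,
        (forall p, fixed_pts act (Ta t x) p -> L2fix act t x (h p) /\ ev (h p) = p)
        /\ {within fixed_pts act (Ta t x), continuous h}],
      (* naturality in X *)
      forall (Y : topologicalType) (actY : 'rV[RR]_n -> Y -> Y) (f : X -> Y),
        finite_TCW actY -> continuous f ->
        (forall u p, f (act u p) = actY u (f p)) ->
        forall g, L2fix act t x g ->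
          L2fix actY t x ((f \o g) : loopT Y) /\ ev ((f \o g) : loopT Y) = f (ev g)
    & (* equivariance along nu : T/T(a) -> (𝕋^2 x T)/T(t,x), [u] |-> [(0,u)] *)
      forall u g, L2fix act t x g ->
        L2fix act t x (loop_act act (0, u) g) /\
        ev (loop_act act (0, u) g) = act u (ev g)].
Proof.
move=> [Hact Hhaus _] XP.
have Hact' := Hact.
case: Hact' => cont act0 actD actint.
have [x1 [x2 dec]] : exists x1 x2, decomp t x x1 x2.
  have [fab hf] := boolp.choice (fun k : 'I_n => XP.1 (x 0 k)).
  have [fb hb] := boolp.choice hf.
  exists (\row_k fab k), (\row_k fb k) => k; rewrite !mxE; exact: hb.
have [T1 T2] := Ta_dec dec.
split; first split.
- move=> g Lg u Tu; rewrite /ev.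
  apply: (Tu [set u | act u (g 0) = g 0]).
    split; [exact: stab_closed | by move=> k kk; apply: actint |].
    move=> a b /= Ha Hb.
    by rewrite -{1}Hb -actD addrNK.
  move=> y1 y2 dy /=.
  have F1 := L2_formula XP dy Lg e1; have F2 := L2_formula XP dy Lg e2.
  rewrite lin_e1 in F1; rewrite lin_e2 in F2.
  case: Lg => -[_ gp] _.
  have P1 : g e1 = g 0 by rewrite -[e1]add0r gp //; exact: e1_int.
  have P2 : g e2 = g 0 by rewrite -[e2]add0r gp //; exact: e2_int.
  by split; [rewrite -F1 | rewrite -F2].
- move=> g g' Lg Lg' E; apply: funext => s.
  by rewrite (L2_formula XP dec Lg) (L2_formula XP dec Lg') -/(ev g) -/(ev g') E.
- apply: continuous_subspaceT => g A /=; rewrite nbhsE => -[B [oB Bg] BA].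
  apply: (@filterS _ _ _ [set h : loopT X | h @` [set 0] `<=` B]).
    by move=> h hB; apply: BA; apply: hB; exists 0.
  apply: open_nbhs_nbhs; split; first exact: (compact_open_open (@compact_set1 'rV[RR]_2 0) oB).
  by move=> _ [_ -> <-].
- exists (fun p => (fun s => act (lin x1 x2 s) p) : loopT X); split.
    move=> p fp; split; last by rewrite /ev lin0 act0.
    split; first split.
    + move=> s.
      apply: (@continuous_comp _ _ _ (fun s => (lin x1 x2 s, p)) (fun q : 'rV[RR]_n * X => act q.1 q.2)).
        by apply: cont_pair; [exact: lin_cont | exact: cst_continuous].
      exact: cont.
    + move=> s k ki /=; rewrite linD actD fp //.
      by apply: H_lin => //; exact: Ta_sg.
    + move=> q Tq; apply: funext => s; rewrite /loop_act /=.
      rewrite -actD linB addrCA actD fp //.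
      exact: Ttx_Kh.
  apply: continuous_subspaceT.
  have Fc : continuous (fun q : X * 'rV[RR]_2 => act (lin x1 x2 q.2) q.1).
    move=> q.
    apply: (@continuous_comp _ _ _ (fun q : X * 'rV[RR]_2 => (lin x1 x2 q.2, q.1)) (fun q : 'rV[RR]_n * X => act q.1 q.2)).
      apply: cont_pair; last exact: cvg_fst.
      apply: (@continuous_comp _ _ _ snd (lin x1 x2)); first exact: cvg_snd.
      exact: lin_cont.
    exact: cont.
  exact: (continuous_curry_fun Fc).
- move=> Y actY f _ fc fe g [[gc gp] gf]; split; last by [].
  split; first split.
  + by move=> s; apply: continuous_comp; [exact: gc | exact: fc].
  + by move=> s k ki /=; rewrite gp.
  + move=> q Tq; apply: funext => s; rewrite /loop_act /= -fe.
    by have := congr1 (fun h : loopT X => h s) (gf q Tq); rewrite /loop_act /= => ->.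
- move=> u g [[gc gp] gf].
  have -> : loop_act act (0, u) g = (fun s => act u (g s)) :> loopT X.
    by apply: funext => s; rewrite /loop_act /= subr0.
  split; last by [].
  split; first split.
  + move=> s; apply: continuous_comp; first exact: gc.
    exact: act_cont_u.
  + by move=> s k ki /=; rewrite gp.
  + move=> q Tq; apply: funext => s; rewrite /loop_act /=.
    rewrite -actD addrC actD.
    by have := congr1 (fun h : loopT X => h s) (gf q Tq); rewrite /loop_act /= => ->.
Qed.
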